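(* Let $\mathcal P_2$ be an $\varepsilon$-additive-approximate short path between nodes $u_0$ and $u_1$, and suppose there is a node $v$ on a shortest path between $u_0$ and $u_1$ such that $\min_{v'\in\mathcal P_2}d_{v,v'}\ge\gamma$. Then, with $\delta=\delta_{\mathrm{worst}}(G)$, $$\varepsilon>\frac{2^{\gamma/(6\delta+1)}}{48\delta+\frac{17}{2}}-\log_2(48\delta+8).$$
   Context: $G=(V,E)$ is a finite connected undirected graph with $n\ge 4$ nodes and $d_{u,v}$ denotes the shortest-path distance (number of edges). For any four nodes $w_1,\dots,w_4$, order the three sums $d_{w_1,w_2}+d_{w_3,w_4}$, $d_{w_1,w_3}+d_{w_2,w_4}$, $d_{w_1,w_4}+d_{w_2,w_3}$ as $S\le M\le L$ and set $\delta_{w_1,w_2,w_3,w_4}=(L-M)/2$; $\delta_{\mathrm{worst}}(G)=\max\delta_{w_1,w_2,w_3,w_4}$. A path $(w_0,\dots,w_k)$ is $\varepsilon$-additive-approximate short if its length (number of edges) is at most $d_{w_0,w_k}+\varepsilon$. *)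

(* Defs.v *)
From Stdlib Require Import Reals List.
Import ListNotations.
Open Scope R_scope.

Section Graphs.
Variable V : Type.
Variable adj : V -> V -> Prop.

Definition simple_undirected : Prop :=
  (forall x y, adj x y -> adj y x) /\ (forall x, ~ adj x x).

Definition finite_at_least4 : Prop :=
  exists l : list V, NoDup l /\ (forall x, In x l) /\ (4 <= length l)%nat.

Fixpoint is_walk (p : list V) : Prop :=
  match p with
  | x :: ((y :: _) as t) => adj x y /\ is_walk t
  | _ => True
  end.

Definition walk_between (u v : V) (p : list V) : Prop :=
  is_walk p /\ hd_error p = Some u /\ last p u = v.

Definition walk_len (p : list V) : nat := (length p - 1)%nat.

Definition connected : Prop :=
  forall u v, exists p, walk_between u v p.

Definition is_graph_distance (d : V -> V -> nat) : Prop :=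
  forall u v,
    (exists p, walk_between u v p /\ walk_len p = d u v) /\
    (forall p, walk_between u v p -> (d u v <= walk_len p)%nat).

Definition on_shortest_path (d : V -> V -> nat) (u0 u1 v : V) : Prop :=
  exists p, walk_between u0 u1 p /\ walk_len p = d u0 u1 /\ In v p.

Definition approx_short (d : V -> V -> nat) (eps : R) (u0 u1 : V) (p : list V)
  : Prop :=
  walk_between u0 u1 p /\ INR (walk_len p) <= INR (d u0 u1) + eps.

(* four-point delta: with S <= M <= L the three pair sums, (L - M)/2 *)
Definition delta_quad (d : V -> V -> nat) (w1 w2 w3 w4 : V) : R :=
  let s1 := INR (d w1 w2 + d w3 w4) in
  let s2 := INR (d w1 w3 + d w2 w4) in
  let s3 := INR (d w1 w4 + d w2 w3) in
  let L := Rmax s1 (Rmax s2 s3) in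
  let S := Rmin s1 (Rmin s2 s3) in
  let M := s1 + s2 + s3 - L - S in
  (L - M) / 2.

Definition is_delta_worst (d : V -> V -> nat) (delta : R) : Prop :=
  (forall w1 w2 w3 w4, delta_quad d w1 w2 w3 w4 <= delta) /\
  (exists w1 w2 w3 w4, delta_quad d w1 w2 w3 w4 = delta).

End Graphs.

Arguments is_walk {V} adj p.
Arguments walk_between {V} adj u v p.
Arguments walk_len {V} p.

(* Main.v *)
Require Import Defs.
From Stdlib Require Import Reals List Lra Lia Arith.
Import ListNotations.
Open Scope R_scope.

Lemma last_indep {V : Type} (a : V) l d1 d2 : last (a :: l) d1 = last (a :: l) d2.
Proof.
  revert a; induction l as [|b l IH]; intros a; [reflexivity|].
  change (last (b :: l) d1 = last (b :: l) d2). apply IH.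
Qed.

Lemma walk_cons {V : Type} (adj : V -> V -> Prop) x y z q :
  adj x y -> walk_between adj y z q ->
  walk_between adj x z (x :: q) /\ walk_len (x :: q) = S (walk_len q).
Proof.
  intros Hxy [Hw [Hh Hl]].
  destruct q as [|y' q]; [discriminate|]. simpl in Hh. injection Hh as ->.
  unfold walk_between, walk_len in *. repeat split; auto.
  - rewrite <- Hl. change (last (y :: q) x = last (y :: q) y). apply last_indep.
  - simpl. lia.
Qed.

Lemma walk_uncons {V : Type} (adj : V -> V -> Prop) x y w r :
  walk_between adj x y (x :: w :: r) ->
  adj x w /\ walk_between adj w y (w :: r) /\ walk_len (x :: w :: r) = S (walk_len (w :: r)).
Proof.
  intros [Hw [Hh Hl]]. destruct Hw as [Hxw Hw]. repeat split; auto.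
  - rewrite <- Hl. change (last (w :: r) w = last (w :: r) x). apply last_indep.
  - unfold walk_len; simpl; lia.
Qed.

Lemma walk_head {V : Type} (adj : V -> V -> Prop) x y p :
  walk_between adj x y p -> exists r, p = x :: r.
Proof. intros [_ [Hh _]]. destruct p; [discriminate|]. injection Hh as ->. eauto. Qed.

Section G.
Variables (V : Type) (adj : V -> V -> Prop) (d : V -> V -> nat).
Hypothesis Hd : is_graph_distance V adj d.
Hypothesis Hsu : simple_undirected V adj.

Lemma d_refl x : d x x = 0%nat.
Proof.
  assert (H : walk_between adj x x [x]) by (repeat split).
  pose proof (proj2 (Hd x x) _ H). unfold walk_len in *; simpl in *; lia.
Qed.

Lemma d_step x y z : adj x y -> (d x z <= S (d y z))%nat.
Proof.
  intros Hxy. destruct (proj1 (Hd y z)) as [q [Hq Hlq]].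
  destruct (walk_cons adj x y z q Hxy Hq) as [H1 H2].
  pose proof (proj2 (Hd x z) _ H1). lia.
Qed.

Lemma d_walk_tri y z : forall p x, walk_between adj x y p -> (d x z <= walk_len p + d y z)%nat.
Proof.
  induction p as [|x0 rest IH]; intros x Hp.
  - destruct (walk_head adj x y [] Hp) as [r Hr]; discriminate.
  - destruct (walk_head adj x y _ Hp) as [r Hr]. injection Hr as -> ->.
    destruct r as [|w r].
    + destruct Hp as [_ [_ Hl]]. simpl in Hl. subst. unfold walk_len; simpl; lia.
    + destruct (walk_uncons adj x y w r Hp) as [Ha [Hw Hlen]].
      pose proof (IH w Hw). pose proof (d_step x w z Ha). lia.
Qed.

Lemma d_tri x y z : (d x z <= d x y + d y z)%nat.
Proof.
  destruct (proj1 (Hd x y)) as [p [Hp Hl]].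
  pose proof (d_walk_tri y z p x Hp). lia.
Qed.

Lemma d_adj x y : adj x y -> (d x y <= 1)%nat.
Proof. intros H. pose proof (d_step x y y H). rewrite d_refl in H0. lia. Qed.

Lemma d_walk_rev y : forall p x, walk_between adj x y p -> (d y x <= walk_len p)%nat.
Proof.
  induction p as [|x0 rest IH]; intros x Hp.
  - destruct (walk_head adj x y [] Hp) as [r Hr]; discriminate.
  - destruct (walk_head adj x y _ Hp) as [r Hr]. injection Hr as -> ->.
    destruct r as [|w r].
    + destruct Hp as [_ [_ Hl]]. simpl in Hl. subst. rewrite d_refl. lia.
    + destruct (walk_uncons adj x y w r Hp) as [Ha [Hw Hlen]].
      pose proof (IH w Hw). pose proof (d_tri y w x).
      pose proof (d_adj w x (proj1 Hsu _ _ Ha)). lia.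
Qed.

Lemma d_sym x y : d x y = d y x.
Proof.
  assert (forall x y, (d y x <= d x y)%nat).
  { intros a b. destruct (proj1 (Hd a b)) as [p [Hp Hl]].
    pose proof (d_walk_rev b p a Hp). lia. }
  pose proof (H x y); pose proof (H y x); lia.
Qed.

Lemma d_on_walk y w : forall p x, walk_between adj x y p -> In w p ->
  (d x w + d w y <= walk_len p)%nat.
Proof.
  induction p as [|x0 rest IH]; intros x Hp Hin.
  - destruct Hin.
  - destruct (walk_head adj x y _ Hp) as [r Hr]. injection Hr as -> ->.
    destruct Hin as [<- | Hin].
    + rewrite d_refl. pose proof (proj2 (Hd x y) _ Hp). lia.
    + destruct r as [|w' r]; [destruct Hin|].
      destruct (walk_uncons adj x y w' r Hp) as [Ha [Hw Hlen]].
      pose proof (IH w' Hw Hin). pose proof (d_step x w' w Ha). lia.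
Qed.

End G.

Lemma walk_nth_adj {V : Type} (adj : V -> V -> Prop) (d0 : V) :
  forall l t, is_walk adj l -> (S t < length l)%nat -> adj (nth t l d0) (nth (S t) l d0).
Proof.
  induction l as [|a l IH]; intros t Hw Ht; [simpl in Ht; lia|].
  destruct l as [|b l]; [simpl in Ht; lia|].
  destruct Hw as [Hab Hw].
  destruct t as [|t]; [exact Hab|].
  change (adj (nth t (b :: l) d0) (nth (S t) (b :: l) d0)).
  apply IH; auto. simpl in *; lia.
Qed.

Lemma nth_last' {V : Type} (d0 : V) : forall l, l <> [] -> nth (length l - 1) l d0 = last l d0.
Proof.
  induction l as [|a l IH]; intros Hne; [congruence|].
  destruct l as [|b l]; [reflexivity|].
  change (nth (length (b :: l)) (a :: b :: l) d0 = last (b :: l) d0).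
  rewrite <- IH by discriminate. replace (length (b :: l) - 1)%nat with (length l) by (simpl; lia). reflexivity.
Qed.

Ltac kill_minmax H s2 s3 :=
  revert H; unfold Rmax, Rmin; destruct (Rle_dec s2 s3); cbv iota;
  repeat match goal with |- context[Rle_dec ?a ?b] => destruct (Rle_dec a b); cbv iota end; intro H;
  repeat match goal with H: ~ _ <= _ |- _ => apply Rnot_le_lt in H end.

Lemma quad_real (s1 s2 s3 dl : R) :
  (Rmax s1 (Rmax s2 s3) - (s1 + s2 + s3 - Rmax s1 (Rmax s2 s3) - Rmin s1 (Rmin s2 s3))) / 2 <= dl ->
  s1 <= s2 + 2 * dl \/ s1 <= s3 + 2 * dl.
Proof.
  intros H. destruct (Rle_dec s3 s2); [left|right]; kill_minmax H s2 s3; lra.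
Qed.

Lemma quad_nonneg (s1 s2 s3 : R) :
  0 <= (Rmax s1 (Rmax s2 s3) - (s1 + s2 + s3 - Rmax s1 (Rmax s2 s3) - Rmin s1 (Rmin s2 s3))) / 2.
Proof.
  unfold Rmax, Rmin; destruct (Rle_dec s2 s3); cbv iota;
  repeat match goal with |- context[Rle_dec ?a ?b] => destruct (Rle_dec a b); cbv iota end;
  repeat match goal with H: ~ _ <= _ |- _ => apply Rnot_le_lt in H end; lra.
Qed.

Definition Gp {V : Type} (d : V -> V -> nat) (v x y : V) : R :=
  INR (d v x) + INR (d v y) - INR (d x y).

Lemma delta_nonneg {V : Type} (d : V -> V -> nat) dl (x : V) :
  is_delta_worst V d dl -> 0 <= dl.
Proof.
  intros [H _]. specialize (H x x x x). unfold delta_quad in H.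
  pose proof (quad_nonneg (INR (d x x + d x x)) (INR (d x x + d x x)) (INR (d x x + d x x))). lra.
Qed.

Lemma four_point {V : Type} (d : V -> V -> nat) dl (v x y z : V) :
  is_delta_worst V d dl -> (forall a b, d a b = d b a) ->
  Gp d v x z + 2 * dl >= Gp d v x y \/ Gp d v x z + 2 * dl >= Gp d v y z.
Proof.
  intros [H _] Hs. specialize (H x z y v). unfold delta_quad in H.
  apply quad_real in H. rewrite !plus_INR in H. unfold Gp.
  rewrite (Hs y v), (Hs z v), (Hs x v), (Hs z y) in H.
  destruct H; [left|right]; lra.
Qed.

Lemma chain {V : Type} (d : V -> V -> nat) dl (v : V) (f : nat -> V) (c : R) :
  0 <= dl ->
  (forall x y z, Gp d v x z + 2 * dl >= Gp d v x y \/ Gp d v x z + 2 * dl >= Gp d v y z) ->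
  forall k i N, (1 <= N <= 2 ^ k)%nat ->
  (forall t, (i <= t < i + N)%nat -> Gp d v (f t) (f (S t)) >= c) ->
  Gp d v (f i) (f (i + N)%nat) >= c - 2 * dl * INR k.
Proof.
  intros Hdl FP. induction k as [|k IH]; intros i N HN Hst.
  - simpl in HN. assert (N = 1%nat) by lia. subst. simpl.
    replace (i + 1)%nat with (S i) by lia. specialize (Hst i ltac:(lia)). lra.
  - rewrite S_INR. rewrite Nat.pow_succ_r' in HN.
    remember (2 ^ k)%nat as p.
    destruct (le_lt_dec N p) as [Hle|Hlt].
    + specialize (IH i N ltac:(lia) Hst). pose proof (pos_INR k). nra.
    + pose proof (IH i p ltac:(lia) ltac:(intros t Ht; apply Hst; lia)) as H1.
      pose proof (IH (i + p)%nat (N - p)%nat ltac:(lia) ltac:(intros t Ht; apply Hst; lia)) as H2.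
      replace (i + p + (N - p))%nat with (i + N)%nat in H2 by lia.
      destruct (FP (f i) (f (i + p)%nat) (f (i + N)%nat)); lra.
Qed.

Lemma ivt_up (g : nat -> nat) (a i : nat) : forall m, (i <= m)%nat -> (g i <= a)%nat -> (a <= g m)%nat ->
  (forall t, (i <= t < m)%nat -> (g (S t) <= S (g t))%nat) -> exists j, (i <= j <= m)%nat /\ g j = a.
Proof.
  induction m as [|m IH]; intros Him H1 H2 Hs.
  - exists 0%nat. assert (i = 0%nat) by lia. subst. split; [lia|]. lia.
  - destruct (Nat.eq_dec i (S m)) as [->|Hne]; [exists (S m); split; lia|].
    destruct (le_lt_dec a (g m)) as [Ha|Ha].
    + destruct (IH ltac:(lia) H1 Ha ltac:(intros t Ht; apply Hs; lia)) as [j Hj]. exists j; split; lia.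
    + exists (S m). specialize (Hs m ltac:(lia)). split; lia.
Qed.

Lemma ivt_down (g : nat -> nat) (a i : nat) : forall m, (i <= m)%nat -> (a <= g i)%nat -> (g m <= a)%nat ->
  (forall t, (i <= t < m)%nat -> (g t <= S (g (S t)))%nat) -> exists j, (i <= j <= m)%nat /\ g j = a.
Proof.
  induction m as [|m IH]; intros Him H1 H2 Hs.
  - exists 0%nat. assert (i = 0%nat) by lia. subst. split; [lia|]. lia.
  - destruct (Nat.eq_dec i (S m)) as [->|Hne]; [exists (S m); split; lia|].
    destruct (le_lt_dec (g m) a) as [Ha|Ha].
    + destruct (IH ltac:(lia) H1 Ha ltac:(intros t Ht; apply Hs; lia)) as [j Hj]. exists j; split; lia.
    + exists (S m). specialize (Hs m ltac:(lia)). split; lia.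
Qed.

Lemma log2_ex (N : nat) : (1 <= N)%nat -> exists k, (N <= 2 ^ k)%nat /\ (2 ^ k <= 2 * N)%nat.
Proof.
  intros HN. destruct (Nat.eq_dec N 1) as [->|Hne]; [exists 0%nat; simpl; lia|].
  pose proof (Nat.log2_up_spec N ltac:(lia)) as [H1 H2].
  pose proof (Nat.log2_up_pos N ltac:(lia)).
  exists (Nat.log2_up N). split; [lia|].
  destruct (Nat.log2_up N) as [|k]; [lia|]. simpl in H1. rewrite Nat.pow_succ_r'. lia.
Qed.

Theorem corollary8 (V : Type) (adj : V -> V -> Prop) (d : V -> V -> nat)
  (delta eps gamma : R) (u0 u1 v : V) (P2 : list V) :
  simple_undirected V adj ->
  finite_at_least4 V ->
  connected V adj ->
  is_graph_distance V adj d ->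
  is_delta_worst V d delta ->
  approx_short V adj d eps u0 u1 P2 ->
  on_shortest_path V adj d u0 u1 v ->
  (forall v', In v' P2 -> gamma <= INR (d v v')) ->
  eps > Rpower 2 (gamma / (6 * delta + 1)) / (48 * delta + 17 / 2)
        - ln (48 * delta + 8) / ln 2.
Proof.
  intros Hsu _ _ Hd Hdw Happ Hsp Hg.
  pose proof (d_sym V adj d Hd Hsu) as Hsym.
  pose proof (delta_nonneg d delta u0 Hdw) as Hdl.
  assert (FP : forall x y z, Gp d v x z + 2 * delta >= Gp d v x y \/ Gp d v x z + 2 * delta >= Gp d v y z)
    by (intros; apply four_point; auto).
  pose proof (d_tri V adj d Hd) as Htri.
  pose proof (d_refl V adj d Hd) as Hrefl.
  destruct Happ as [HP2 Hlen].
  pose proof HP2 as [Hw [Hh Hl]].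
  set (m := walk_len P2) in *.
  set (f := fun t => nth t P2 u0).
  set (a := d u0 v). set (b := d v u1). set (n := d u0 u1) in *.
  assert (Ea : a = d u0 v) by reflexivity. assert (Eb : b = d v u1) by reflexivity.
  assert (En : n = d u0 u1) by reflexivity.
  clearbody a b n.
  assert (Hab : (a + b <= n)%nat).
  { destruct Hsp as [p [Hp [Hpl Hin]]].
    pose proof (d_on_walk V adj d Hd u1 v p u0 Hp Hin). lia. }
  assert (Hnm : (n <= m)%nat) by (rewrite En; exact (proj2 (Hd u0 u1) _ HP2)).
  assert (Hne : P2 <> []) by (intro E; subst; discriminate).
  assert (f0 : f 0%nat = u0).
  { unfold f. destruct P2; [congruence|]. simpl in Hh. injection Hh as ->. reflexivity. }
  assert (fm : f m = u1).
  { unfold f, m, walk_len. rewrite nth_last' by exact Hne. exact Hl. }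
  assert (fadj : forall t, (t < m)%nat -> adj (f t) (f (S t))).
  { intros t Ht. apply walk_nth_adj; auto. unfold m, walk_len in Ht. lia. }
  assert (fin : forall t, (t <= m)%nat -> In (f t) P2).
  { intros t Ht. apply nth_In. unfold m, walk_len in Ht. destruct P2; [congruence|]. simpl in *. lia. }
  assert (f1 : forall t, (t < m)%nat -> (d (f t) (f (S t)) <= 1)%nat).
  { intros t Ht. apply (d_adj V adj d Hd). auto. }
  assert (fstep : forall k i, (i + k <= m)%nat -> (d (f i) (f (i + k)%nat) <= k)%nat).
  { induction k as [|k IH]; intros i Hik.
    - rewrite Nat.add_0_r, Hrefl. lia.
    - pose proof (IH i ltac:(lia)). pose proof (f1 (i + k)%nat ltac:(lia)).
      pose proof (Htri (f i) (f (i + k)%nat) (f (S (i + k)))).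
      replace (i + S k)%nat with (S (i + k)) by lia. lia. }
  assert (Hgt : forall t, (t <= m)%nat -> gamma <= INR (d v (f t))) by (intros; apply Hg, fin; auto).
  assert (Hgi : forall t, (t <= m)%nat -> (d u0 (f t) <= t)%nat).
  { intros t Ht. rewrite <- f0. pose proof (fstep t 0%nat ltac:(lia)). simpl in H. exact H. }
  assert (Hhi : forall t, (t <= m)%nat -> (d (f t) u1 <= m - t)%nat).
  { intros t Ht. rewrite <- fm. pose proof (fstep (m - t)%nat t ltac:(lia)).
    replace (t + (m - t))%nat with m in H by lia. exact H. }
  destruct (ivt_up (fun t => d u0 (f t)) a 0 m ltac:(lia)) as [i [Hi Hgia]].
  { simpl. rewrite f0, Hrefl. lia. }
  { simpl. rewrite fm. lia. }
  { intros t Ht. simpl. pose proof (Htri u0 (f t) (f (S t))). pose proof (f1 t ltac:(lia)). lia. }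
  simpl in Hgia. assert (Hi' : (i <= m)%nat) by lia. clear Hi. rename Hi' into Hi.
  assert (Hj : exists j, (i <= j <= m)%nat /\ (d (f j) u1 <= b)%nat /\ (j = i \/ d (f j) u1 = b)).
  { destruct (le_lt_dec (d (f i) u1) b) as [Hle|Hlt].
    - exists i. repeat split; auto; lia.
    - destruct (ivt_down (fun t => d (f t) u1) b i m ltac:(lia)) as [j [Hj1 Hj2]].
      + simpl. lia.
      + simpl. rewrite fm, Hrefl. lia.
      + intros t Ht. simpl. pose proof (Htri (f t) (f (S t)) u1). pose proof (f1 t ltac:(lia)). lia.
      + simpl in Hj2. exists j. repeat split; try lia. }
  destruct Hj as [j [Hj [Hhj Hjcase]]].
  assert (Heps0 : 0 <= eps).
  { apply le_INR in Hnm. lra. }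
  assert (HN : INR (j - i) <= 2 * eps).
  { destruct Hjcase as [->|Hb].
    - rewrite Nat.sub_diag. simpl. lra.
    - assert (Hnat : (j - i + 2 * n <= 2 * m)%nat).
      { pose proof (Htri u0 (f i) u1). pose proof (Hgi i Hi). pose proof (Hhi i Hi).
        pose proof (Hhi j ltac:(lia)). pose proof (Htri u0 v u1). lia. }
      apply le_INR in Hnat. rewrite plus_INR, !mult_INR in Hnat. simpl in Hnat. lra. }
  assert (G0 : Gp d v u0 u1 <= 0).
  { unfold Gp. rewrite (Hsym v u0), <- Ea, <- Eb, <- En. apply le_INR in Hab. rewrite plus_INR in Hab. lra. }
  assert (G1 : Gp d v u0 (f i) >= gamma).
  { unfold Gp. rewrite (Hsym v u0), <- Ea. rewrite Hgia. pose proof (Hgt i Hi). lra. }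
  assert (G2 : Gp d v (f j) u1 >= gamma).
  { unfold Gp. rewrite <- Eb. pose proof (Hgt j ltac:(lia)). apply le_INR in Hhj. lra. }
  assert (G3 : exists k, Gp d v (f i) (f j) >= 2 * gamma - 1 - 2 * delta * INR k /\
                         INR (2 ^ k) <= 2 * INR (j - i) + 1).
  { destruct (Nat.eq_dec j i) as [->|Hji].
    - exists 0%nat. unfold Gp. rewrite Hrefl, Nat.sub_diag. simpl.
      pose proof (Hgt i Hi). lra.
    - destruct (log2_ex (j - i) ltac:(lia)) as [k [Hk1 Hk2]].
      exists k. split.
      + pose proof (chain d delta v f (2 * gamma - 1) Hdl FP k i (j - i)%nat ltac:(lia)) as Hc.
        replace (i + (j - i))%nat with j in Hc by lia. apply Hc.
        intros t Ht. unfold Gp. pose proof (Hgt t ltac:(lia)). pose proof (Hgt (S t) ltac:(lia)).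
        pose proof (f1 t ltac:(lia)) as H1. apply le_INR in H1. simpl in H1. lra.
      + apply le_INR in Hk2. rewrite mult_INR in Hk2. simpl in Hk2. lra. }
  destruct G3 as [k [G3 Hk]].
  assert (Hgam : gamma <= (6 * delta + 1) * INR (S k)).
  { rewrite S_INR. pose proof (pos_INR k).
    destruct (FP u0 (f i) u1) as [F1|F1].
    - nra.
    - destruct (FP (f i) (f j) u1) as [F2|F2]; nra. }
  assert (Hpow : Rpower 2 (gamma / (6 * delta + 1)) <= 2 + 8 * eps).
  { assert (Hx : gamma / (6 * delta + 1) <= INR (S k)).
    { apply Rmult_le_reg_r with (6 * delta + 1); [lra|].
      unfold Rdiv. rewrite Rmult_assoc, Rinv_l by lra. lra. }
    eapply Rle_trans; [apply Rle_Rpower; [lra|exact Hx]|].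
    rewrite Rpower_pow by lra. rewrite pow_INR in Hk. simpl in Hk |- *.
    replace (1 + 1) with 2 in Hk by lra. lra. }
  assert (Hln2 : 0 < ln 2) by (rewrite <- ln_1; apply ln_increasing; lra).
  assert (Hln8 : ln 8 = 3 * ln 2).
  { replace 8 with (2 * (2 * 2)) by lra. rewrite !ln_mult by lra. lra. }
  assert (HL : ln 8 <= ln (48 * delta + 8)).
  { destruct (Req_dec delta 0) as [->|Hz].
    - replace (48 * 0 + 8) with 8 by lra. lra.
    - left. apply ln_increasing; lra. }
  assert (HL3 : 3 <= ln (48 * delta + 8) / ln 2).
  { apply Rmult_le_reg_r with (ln 2); [lra|].
    unfold Rdiv. rewrite Rmult_assoc, Rinv_l by lra. lra. }
  assert (HR : Rpower 2 (gamma / (6 * delta + 1)) / (48 * delta + 17 / 2) <= (2 + 8 * eps) / (17 / 2)).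
  { unfold Rdiv. pose proof (exp_pos (gamma / (6 * delta + 1) * ln 2)).
    unfold Rpower in *.
    apply Rle_trans with (exp (gamma / (6 * delta + 1) * ln 2) * / (17 / 2)).
    - apply Rmult_le_compat_l; [lra|]. apply Rinv_le_contravar; lra.
    - apply Rmult_le_compat_r; [lra|]. lra. }
  lra.
Qed.
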